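(* Assume the setting described in the context, and let $\langle e^m_\alpha:\alpha<\lambda,m<\omega\rangle$ be a generalized $C$-sequence on $\lambda$ such that for all $\alpha<\lambda$ and $m<\omega$: $|e^m_\alpha|\leq\mathrm{cf}(\alpha)+\mu_m^+$, and if $\delta\in S\cap e^m_\alpha$ then $C_\delta[m]\subseteq e^m_\alpha$. Let $\langle t_\alpha:\alpha<\lambda\rangle$ be a pairwise disjoint family of finite subsets of $\lambda$. Then for $\mathrm{id}_p(\bar C,\bar I)$-almost all $\beta^*<\lambda$ (that is, the set of $\beta^*<\lambda$ for which the following fails belongs to $\mathrm{id}_p(\bar C,\bar I)$) there are $\alpha<\beta<\lambda$ and $m<\omega$ such that for every $\zeta\in t_\alpha$ and $\xi\in t_\beta$, the $m$-walk from $\xi$ to $\zeta$ passes through $\beta^*$, i.e. $\beta^*=\beta^m_k(\zeta,\xi)$ for some $k$.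
   Context: Setting: $\mu$ is a singular cardinal with $\mathrm{cf}(\mu)=\aleph_0$, $\lambda=\mu^+$, $\sigma$ is a regular cardinal with $\aleph_0<\sigma<\mu$, $S$ is a stationary subset of $\{\delta<\lambda:\mathrm{cf}(\delta)=\sigma\}$, and $\langle\mu_i:i<\omega\rangle$ is a strictly increasing sequence of regular cardinals cofinal in $\mu$ with $\sigma<\mu_0$. For each $\delta\in S$, $c^0_\delta$ is the increasing enumeration of a closed unbounded subset of $\delta$ of order type $\sigma$, and for every club $E\subseteq\lambda$ the set of $\delta\in S$ with $\mathrm{ran}(c^0_\delta)\subseteq E$ is stationary. For $\delta\in S$, $\epsilon<\sigma$, $m<\omega$, $I(\delta,\epsilon,m)$ is the half-open interval $(c^0_\delta(\omega\cdot\epsilon+m),c^0_\delta(\omega\cdot\epsilon+m+1)]$. $\bar C=\langle C_\delta:\delta\in S\rangle$ satisfies: $C_\delta$ is closed unbounded in $\delta$; $\mathrm{ran}(c^0_\delta)\subseteq C_\delta$; $|C_\delta\cap I(\delta,\epsilon,m)|\leq\mu_m^+$; every $\alpha\in\mathrm{nacc}(C_\delta)\cap I(\delta,\epsilon,m)$ has $\mathrm{cf}(\alpha)>\mu_m^+$; for every club $E\subseteq\lambda$ there are stationarily many $\delta\in S$ such that $E\cap\mathrm{nacc}(C_\delta)\cap I(\delta,\epsilon,m)\neq\emptyset$ for all $\epsilon<\sigma$, $m<\omega$. Here for $C$ club in $\delta$, $\mathrm{acc}(C)=\{\alpha<\delta:\alpha=\sup(\alpha\cap C)\}$, $\mathrm{nacc}(C)=C\setminus\mathrm{acc}(C)$.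 For $\delta\in S$, $I_\delta$ is the ideal on $C_\delta$ generated by the sets $\{\gamma\in C_\delta:\gamma\in\mathrm{acc}(C_\delta)\text{ or }\mathrm{cf}(\gamma)<\alpha\text{ or }\gamma<\beta\}$ for $\alpha<\mu$, $\beta<\delta$; $\mathrm{id}_p(\bar C,\bar I)$ is the ideal of all $A\subseteq\lambda$ for which there is a club $E\subseteq\lambda$ with $A\cap E\cap C_\delta\in I_\delta$ for all $\delta\in S\cap E$. $C_\delta[m]=\mathrm{ran}(c^0_\delta)\cup\bigcup\{C_\delta\cap I(\delta,\epsilon,i):\epsilon<\sigma, i\leq m\}$. A generalized $C$-sequence on $\lambda$ is a family $\langle e^m_\alpha:\alpha<\lambda,m<\omega\rangle$ with each $e^m_\alpha$ closed unbounded in $\alpha$ and $e^m_\alpha\subseteq e^{m+1}_\alpha$. Walks: for $\alpha<\beta<\lambda$ and $m<\omega$, $\beta^m_0(\alpha,\beta)=\beta$ and $\beta^m_{i+1}(\alpha,\beta)=\min(e^m_{\beta^m_i(\alpha,\beta)}\setminus\alpha)$ if $\beta^m_i(\alpha,\beta)>\alpha$, and $=\alpha$ otherwise; $\rho^m_2(\alpha,\beta)$ is the least $i$ with $\beta^m_i(\alpha,\beta)=\alpha$; the $m$-walk from $\beta$ to $\alpha$ is $\langle\beta^m_i(\alpha,\beta):i\leq\rho^m_2(\alpha,\beta)\rangle$. *)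

(* Defs.v *)
(* The cardinal lambda = mu^+ is modelled as a type L carrying a
   strict well-order lt; ordinals < lambda are the elements of L, an ordinal a
   is identified with its initial segment (seg a), and cardinalities of subsets
   of L are compared via injections. *)
From Stdlib Require Import List.
Set Implicit Arguments.
Unset Strict Implicit.

Section WO.
Variable L : Type.
Variable lt : L -> L -> Prop.

Definition le (x y : L) : Prop := lt x y \/ x = y.

Definition wellorder : Prop :=
  (forall x, ~ lt x x) /\
  (forall x y z, lt x y -> lt y z -> lt x z) /\
  (forall x y, lt x y \/ x = y \/ lt y x) /\
  well_founded lt.

Definition seg (a : L) : L -> Prop := fun x => lt x a.

Definition le_card (A B : L -> Prop) : Prop :=
  exists f : L -> L, (forall x, A x -> B (f x)) /\
    (forall x y, A x -> A y -> f x = f y -> x = y).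

(* |A| <= k + n  (cardinal sum, realised as a disjoint union of seg k and seg n) *)
Definition le_card_sum (A : L -> Prop) (k n : L) : Prop :=
  exists f : L -> L + L,
    (forall x, A x -> match f x with inl y => lt y k | inr y => lt y n end) /\
    (forall x y, A x -> A y -> f x = f y -> x = y).

Definition is_card (k : L) : Prop :=
  forall b, lt b k -> ~ le_card (seg k) (seg b).

Definition cofinal_in (X : L -> Prop) (a : L) : Prop :=
  forall x, lt x a -> exists y, X y /\ le x y.

Definition has_cof_le (a k : L) : Prop :=
  exists X : L -> Prop, (forall x, X x -> lt x a) /\ cofinal_in X a /\ le_card X (seg k).

Definition cof (a k : L) : Prop :=
  has_cof_le a k /\ forall k', lt k' k -> ~ has_cof_le a k'.

Definition regular (k : L) : Prop := is_card k /\ cof k k.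

Definition succ_card (n k : L) : Prop :=
  ~ le_card (seg k) (seg n) /\ forall b, lt b k -> le_card (seg b) (seg n).

Definition is_zero (a : L) : Prop := forall x, ~ lt x a.

Definition is_limit (a : L) : Prop :=
  (exists x, lt x a) /\ forall x, lt x a -> exists y, lt x y /\ lt y a.

Definition is_omega (w : L) : Prop :=
  is_limit w /\ forall x, lt x w -> ~ is_limit x.

Definition immsucc (a b : L) : Prop := lt a b /\ forall x, lt a x -> ~ lt x b.

Inductive plus_nat (g : L) : nat -> L -> Prop :=
| pn0 : plus_nat g 0 g
| pnS : forall m x y, plus_nat g m x -> immsucc x y -> plus_nat g (S m) y.

Definition acc_in (C : L -> Prop) (a : L) : Prop :=
  forall x, lt x a -> exists y, C y /\ lt x y /\ lt y a.

Definition nacc_in (C : L -> Prop) (a : L) : Prop := C a /\ ~ acc_in C a.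

Definition club_in (C : L -> Prop) (d : L) : Prop :=
  (forall x, C x -> lt x d) /\ cofinal_in C d /\
  (forall a, lt a d -> (exists y, C y /\ lt y a) -> acc_in C a -> C a).

Definition club (E : L -> Prop) : Prop :=
  (forall x, exists y, E y /\ lt x y) /\
  (forall a, (exists y, E y /\ lt y a) -> acc_in E a -> E a).

Definition stationary (S : L -> Prop) : Prop :=
  forall E, club E -> exists d, S d /\ E d.

Definition ran_below (f : L -> L) (s : L) : L -> Prop :=
  fun x => exists i, lt i s /\ f i = x.

Definition strict_incr_below (f : L -> L) (s : L) : Prop :=
  forall i j, lt i j -> lt j s -> lt (f i) (f j).

(* g = omega * epsilon for some epsilon < sigma, i.e. g < sigma is 0 or a limit *)
Definition index_base (s g : L) : Prop := lt g s /\ (is_zero g \/ is_limit g).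

(* I(delta, epsilon, m) with c = c^0_delta and g = omega*epsilon :
   the half-open interval (c(g+m), c(g+m+1)] *)
Definition interval (c : L -> L) (g : L) (m : nat) (x : L) : Prop :=
  exists a b, plus_nat g m a /\ plus_nat g (S m) b /\ lt (c a) x /\ le x (c b).

Definition Cm (c : L -> L) (s : L) (C : L -> Prop) (m : nat) (x : L) : Prop :=
  ran_below c s x \/
  (C x /\ exists g i, index_base s g /\ i <= m /\ interval c g i x).

Definition gen_set (C : L -> Prop) (cf : L -> L) (a b x : L) : Prop :=
  C x /\ (acc_in C x \/ lt (cf x) a \/ lt x b).

Definition in_I (mu : L) (C : L -> Prop) (cf : L -> L) (d : L) (A : L -> Prop) : Prop :=
  (forall x, A x -> C x) /\
  exists l : list (L * L),
    Forall (fun p => lt (fst p) mu /\ lt (snd p) d) l /\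
    forall x, A x -> exists p, In p l /\ gen_set C cf (fst p) (snd p) x.

Definition in_idp (S : L -> Prop) (mu : L) (C : L -> L -> Prop) (cf : L -> L)
  (A : L -> Prop) : Prop :=
  exists E, club E /\
    forall d, S d -> E d -> in_I mu (C d) cf d (fun x => A x /\ E x /\ C d x).

Definition is_min (P : L -> Prop) (y : L) : Prop := P y /\ forall z, P z -> le y z.

(* walkpt e a b k x : beta_k(a, b) = x for the walk along e (e x = e_x) *)
Inductive walkpt (e : L -> L -> Prop) (a b : L) : nat -> L -> Prop :=
| wp0 : walkpt e a b 0 b
| wpS : forall k x y, walkpt e a b k x -> lt a x ->
          is_min (fun z => e x z /\ le a z) y -> walkpt e a b (S k) y
| wpE : forall k x, walkpt e a b k x -> ~ lt a x -> walkpt e a b (S k) a.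

Definition finite_set (A : L -> Prop) : Prop :=
  exists l : list L, forall x, A x <-> In x l.

End WO.

(* Main.v *)
Require Import Defs.
From Stdlib Require Import List Classical ClassicalEpsilon Lia Arith PeanoNat.

Lemma choice_fun {A B : Type} (P : A -> B -> Prop) :
  (forall a, exists b, P a b) -> exists f : A -> B, forall a, P a (f a).
Proof.
  intros H. exists (fun a => proj1_sig (constructive_indefinite_description _ (H a))).
  intro a. exact (proj2_sig (constructive_indefinite_description _ (H a))).
Qed.


Section Main.
Variable L : Type.
Variable lt : L -> L -> Prop.
Hypothesis Hwo : wellorder lt.

Lemma lt_irr x : ~ lt x x.
Proof. destruct Hwo as [H _]; auto. Qed.
Lemma lt_tr x y z : lt x y -> lt y z -> lt x z.
Proof. destruct Hwo as [_ [H _]]; eauto. Qed.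
Lemma lt_tot x y : lt x y \/ x = y \/ lt y x.
Proof. destruct Hwo as [_ [_ [H _]]]; auto. Qed.
Lemma lt_wf : well_founded lt.
Proof. destruct Hwo as [_ [_ [_ H]]]; auto. Qed.

Lemma lt_asym x y : lt x y -> lt y x -> False.
Proof. intros; apply (lt_irr x); eauto using lt_tr. Qed.
Lemma le_refl x : le lt x x.
Proof. right; auto. Qed.
Lemma le_tr x y z : le lt x y -> le lt y z -> le lt x z.
Proof. intros [H|H] [H'|H']; subst; unfold le; eauto using lt_tr. Qed.
Lemma lt_le_tr x y z : lt x y -> le lt y z -> lt x z.
Proof. intros H [H'|H']; subst; eauto using lt_tr. Qed.
Lemma le_lt_tr x y z : le lt x y -> lt y z -> lt x z.
Proof. intros [H|H] H'; subst; eauto using lt_tr. Qed.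
Lemma le_lt_false x y : le lt x y -> lt y x -> False.
Proof. intros [H|H] H'; subst; eauto using lt_asym, lt_irr. Qed.
Lemma not_lt_le x y : ~ lt x y -> le lt y x.
Proof. intros H. destruct (lt_tot x y) as [h|[h|h]]; [tauto| subst; apply le_refl | left; auto]. Qed.
Lemma not_le_lt x y : ~ le lt x y -> lt y x.
Proof. intros H. destruct (lt_tot x y) as [h|[h|h]]; [ exfalso; apply H; left; auto | subst; exfalso; apply H; apply le_refl | auto]. Qed.
Lemma lt_le x y : lt x y -> le lt x y.
Proof. left; auto. Qed.
Lemma le_antisym x y : le lt x y -> le lt y x -> x = y.
Proof. intros [H|H] H'; auto. exfalso; eauto using le_lt_false. Qed.

Lemma min_ex (P : L -> Prop) : (exists x, P x) -> exists y, is_min lt P y.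
Proof.
  intros [x Hx]. apply NNPP; intro Hn.
  assert (forall z, ~ P z).
  { intro z. induction z as [z IH] using (well_founded_ind lt_wf).
    intro Pz. apply Hn. exists z. split; auto. intros u Pu.
    apply not_lt_le. intro h. exact (IH u h Pu). }
  exact (H x Hx).
Qed.

Lemma max2 x y : exists z, le lt x z /\ le lt y z /\ (z = x \/ z = y).
Proof.
  destruct (lt_tot x y) as [h|[h|h]].
  - exists y; repeat split; auto using le_refl, lt_le.
  - subst; exists y; repeat split; auto using le_refl.
  - exists x; repeat split; auto using le_refl, lt_le.
Qed.

Lemma lub_ex (P : L -> Prop) (b : L) : (forall x, P x -> le lt x b) ->
  exists s, (forall x, P x -> le lt x s) /\ (forall y, lt y s -> exists x, P x /\ lt y x).
Proof.
  intros Hb. destruct (min_ex (fun s => forall x, P x -> le lt x s)) as [s [H1 H2]]; eauto.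
  exists s; split; auto. intros y Hy. apply NNPP; intro Hn.
  assert (Hu: forall x, P x -> le lt x y).
  { intros x Px. apply not_lt_le. intro h. apply Hn; eauto. }
  specialize (H2 y Hu). eapply le_lt_false; eauto.
Qed.

Lemma immsucc_uniq x y y' : immsucc lt x y -> immsucc lt x y' -> y = y'.
Proof.
  intros [h1 h2] [h1' h2']. destruct (lt_tot y y') as [h|[h|h]]; auto.
  - exfalso; apply (h2' y); auto.
  - exfalso; apply (h2 y'); auto.
Qed.
Lemma immsucc_pred_uniq x x' y : immsucc lt x y -> immsucc lt x' y -> x = x'.
Proof.
  intros [h1 h2] [h1' h2']. destruct (lt_tot x x') as [h|[h|h]]; auto.
  - exfalso; apply (h2 x'); auto.
  - exfalso; apply (h2' x); auto.
Qed.

Lemma succ_ex x z : lt x z -> exists y, immsucc lt x y /\ le lt y z.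
Proof.
  intros h. destruct (min_ex (fun y => lt x y)) as [y [H1 H2]]; eauto.
  exists y; split; auto. split; auto. intros u h1 h2. specialize (H2 u h1). eapply le_lt_false; eauto.
Qed.

Definition base (g : L) := is_zero lt g \/ is_limit lt g.

Lemma immsucc_not_base x y : immsucc lt x y -> ~ base y.
Proof.
  intros [h1 h2] [Hz|[_ Hl]]. apply (Hz x h1). destruct (Hl x h1) as [u [a b]]. apply (h2 u); auto.
Qed.

Lemma not_base_pred y : ~ base y -> exists x, immsucc lt x y.
Proof.
  intros H. apply NNPP; intro Hn. apply H. right. split.
  - apply NNPP; intro h. apply H. left. intros x hx. apply h; eauto.
  - intros x hx. apply NNPP; intro h. apply Hn. exists x. split; auto.
    intros u h1 h2. apply h; eauto.
Qed.

Lemma plus_nat_le g n y : plus_nat lt g n y -> le lt g y.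
Proof. induction 1. apply le_refl. destruct H0. eapply le_tr; eauto using lt_le. Qed.

Lemma plus_nat_fun g n y y' : plus_nat lt g n y -> plus_nat lt g n y' -> y = y'.
Proof.
  intros H; revert y'; induction H; intros y' H'; inversion H'; subst; auto.
  assert (x = x0) by eauto. subst. eauto using immsucc_uniq.
Qed.

Lemma plus_nat_inj g g' n n' y : base g -> base g' -> plus_nat lt g n y -> plus_nat lt g' n' y -> g = g' /\ n = n'.
Proof.
  intros Hg Hg' H; revert n' Hg'; induction H; intros n' Hg' H'.
  - inversion H'; subst; auto. exfalso; eapply immsucc_not_base; eauto.
  - inversion H'; subst.
    + exfalso; eapply immsucc_not_base; eauto.
    + assert (x = x0) by eauto using immsucc_pred_uniq. subst.
      destruct (IHplus_nat _ Hg' H1); subst; auto.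
Qed.

Lemma decomp y : exists g n, base g /\ plus_nat lt g n y.
Proof.
  induction y as [y IH] using (well_founded_ind lt_wf).
  destruct (classic (base y)) as [h|h].
  - exists y, 0; split; auto; constructor.
  - destruct (not_base_pred _ h) as [x hx]. destruct (IH x (proj1 hx)) as [g [n [H1 H2]]].
    exists g, (S n); split; auto. econstructor; eauto.
Qed.

Lemma plus_nat_lt_limit g k m : lt g m \/ g = g -> is_limit lt m -> le lt g g -> lt g m -> exists z, plus_nat lt g k z /\ lt z m.
Proof.
  intros _ Hl _ hg. induction k.
  - exists g; split; auto; constructor.
  - destruct IHk as [z [h1 h2]]. destruct (proj2 Hl z h2) as [u [u1 u2]].
    destruct (succ_ex _ _ u1) as [v [v1 v2]]. exists v; split. econstructor; eauto. eapply le_lt_tr; eauto.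
Qed.

Variable cf : L -> L.
Hypothesis Hcf : forall a, cof lt a (cf a).
Variable w : L.
Hypothesis Hw : is_omega lt w.
Variable mu : L.
Hypothesis Hmu_cf : cof lt mu w.
Hypothesis Hlam1 : forall a, le_card (seg lt a) (seg lt mu).
Hypothesis Hlam2 : ~ le_card (fun _ => True) (seg lt mu).
Variable sigma : L.
Hypothesis Hsig_w : lt w sigma.
Hypothesis Hsig_mu : lt sigma mu.
Variable SS : L -> Prop.
Hypothesis HS_stat : stationary lt SS.
Hypothesis HS_cf : forall d, SS d -> cof lt d sigma.
Variable t : L -> L -> Prop.
Hypothesis Ht_disj : forall a b x, a <> b -> t a x -> t b x -> False.

Local Notation le := (le lt).
Local Hint Resolve lt_le le_refl : core.
Local Hint Resolve lt_tr lt_le_tr le_lt_tr lt_irr : core.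

Lemma w_lim : is_limit lt w.
Proof. destruct Hw; auto. Qed.

Lemma two_below_w : exists k' x, lt x k' /\ lt k' w.
Proof.
  destruct w_lim as [[x0 h0] H]. destruct (H x0 h0) as [x1 [h1 h2]]. eauto.
Qed.

Lemma cof_limit a k : cof lt a k -> (exists k' x, lt x k' /\ lt k' k) -> is_limit lt a.
Proof.
  intros [_ Hmin] [k' [x [hx hk]]]. split.
  - apply NNPP; intro hn. apply (Hmin k' hk). exists (fun _ => False). repeat split; try tauto.
    intros y hy; exfalso; apply hn; eauto.
    exists (fun y => y); split; intros; tauto.
  - intros z hz. apply NNPP; intro hn. apply (Hmin k' hk). exists (fun y => y = z). repeat split.
    + intros; subst; auto.
    + intros y hy. exists z; split; auto. apply not_lt_le; auto. intro h. apply hn; eauto.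
    + exists (fun _ => x). split. intros; exact hx. intros; subst; auto.
Qed.

Lemma cof_limit_w a k : cof lt a k -> le w k -> is_limit lt a.
Proof.
  intros H hk. apply (cof_limit _ _ H). destruct two_below_w as [k' [x [h1 h2]]].
  exists k', x; split; eauto.
Qed.

Lemma mu_lim : is_limit lt mu.
Proof. apply (cof_limit_w _ _ Hmu_cf); auto. Qed.

Lemma SS_lim d : SS d -> is_limit lt d.
Proof. intros h. apply (cof_limit_w _ _ (HS_cf d h)). auto. Qed.

Definition comp (r : L) (u : L + L) : Prop := match u with inl y => lt y r | inr y => lt y r end.
Definition uval (u : L + L) : L := match u with inl y => y | inr y => y end.
Definition utag (u : L + L) : nat := match u with inl _ => 0 | inr _ => 1 end.

Lemma Kmu : exists F : L + L -> L, (forall u, comp mu u -> lt (F u) mu) /\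
  (forall u v, comp mu u -> comp mu v -> F u = F v -> u = v).
Proof.
  destruct (choice_fun (fun u z => comp mu u -> exists g n, base g /\ plus_nat lt g n (uval u) /\
      plus_nat lt g (2 * n + utag u) z /\ lt z mu)) as [F HF].
  { intro u. destruct (classic (comp mu u)) as [hc|hc].
    - destruct (decomp (uval u)) as [g [n [hb hp]]].
      assert (lt g mu). { apply (le_lt_tr) with (uval u); [eapply plus_nat_le; eauto|]. destruct u; exact hc. }
      destruct (plus_nat_lt_limit g (2*n + utag u) mu (or_intror eq_refl) mu_lim (le_refl _) H) as [z [h1 h2]].
      exists z; intros _; eauto 6.
    - exists (uval u); tauto. }
  exists F; split.
  - intros u hu. destruct (HF u hu) as [g [n [_ [_ [_ h]]]]]; auto.
  - intros u v hu hv he. destruct (HF u hu) as [g [n [hb [hp [hq _]]]]].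
    destruct (HF v hv) as [g' [n' [hb' [hp' [hq' _]]]]]. rewrite he in hq.
    destruct (plus_nat_inj _ _ _ _ _ hb hb' hq hq') as [e1 e2]; subst g'.
    assert (n = n' /\ utag u = utag v) as [e3 e4].
    { destruct u, v; simpl in *; lia. } subst n'.
    assert (uval u = uval v) by (eapply plus_nat_fun; eauto).
    destruct u, v; simpl in *; congruence.
Qed.

Lemma L_not_small r : ~ exists f : L -> L + L, (forall x, comp r (f x)) /\
  (forall x y, f x = f y -> x = y).
Proof.
  intros [f [H1 H2]]. destruct (Hlam1 r) as [h [h1 h2]]. destruct Kmu as [F [F1 F2]].
  apply Hlam2. exists (fun x => F (match f x with inl y => inl (h y) | inr y => inr (h y) end)).
  assert (Hc : forall x, comp mu (match f x with inl y => inl (h y) | inr y => inr (h y) end)).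
  { intro x. specialize (H1 x). destruct (f x); simpl in *; apply h1; auto. }
  split; [intros; apply F1; auto|].
  intros x y _ _ he. apply F2 in he; auto. apply H2.
  pose proof (H1 x) as q1; pose proof (H1 y) as q2.
  destruct (f x), (f y); simpl in *; inversion he; f_equal; apply h2; auto.
Qed.

Lemma no_max x : exists y, lt x y.
Proof.
  apply NNPP; intro hn.
  assert (Hall : forall y, le y x). { intro y. apply not_lt_le; auto. intro h; apply hn; eauto. }
  destruct mu_lim as [[x0 h0] _].
  assert (hx0 : lt x0 x) by (eapply lt_le_tr; eauto).
  apply (L_not_small x). exists (fun y => if excluded_middle_informative (y = x) then inr x0 else inl y).
  split.
  - intro y. destruct (excluded_middle_informative (y = x)); simpl; auto.
    destruct (Hall y); tauto.
  - intros y z. destruct (excluded_middle_informative (y = x)), (excluded_middle_informative (z = x));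
      intro he; inversion he; subst; auto.
Qed.

Lemma fact2 eta : exists a, lt eta a /\ forall z, t a z -> lt eta z.
Proof.
  apply NNPP; intro hn.
  assert (H : forall a, lt eta a -> exists z, t a z /\ le z eta).
  { intros a ha. apply NNPP; intro h2. apply hn. exists a; split; auto. intros z hz.
    apply not_le_lt; auto. intro h3. apply h2; eauto. }
  destruct (no_max eta) as [r hr].
  destruct (choice_fun (fun x u => (le x eta -> u = inl x) /\ (lt eta x -> exists z, u = inr z /\ t x z /\ le z eta))) as [f Hf].
  { intro x. destruct (lt_tot eta x) as [h|h].
    - destruct (H x h) as [z [z1 z2]]. exists (inr z). split; eauto. intro h'; exfalso; eapply le_lt_false; eauto.
    - exists (inl x). split; auto. intro h'. exfalso. destruct h as [h|h]; subst; eauto using (lt_irr), (lt_asym). }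
  apply (L_not_small r). exists f. split.
  - intro x. destruct (lt_tot eta x) as [h|h].
    + destruct (proj2 (Hf x) h) as [z [e1 [_ e3]]]. rewrite e1. simpl. eapply le_lt_tr; eauto.
    + rewrite (proj1 (Hf x)). simpl. destruct h as [h|h]; subst; eauto.
      destruct h as [h|h]; subst; auto.
  - intros x y he. destruct (lt_tot eta x) as [hx|hx], (lt_tot eta y) as [hy|hy].
    + destruct (proj2 (Hf x) hx) as [z [e1 [e2 _]]]. destruct (proj2 (Hf y) hy) as [z' [e1' [e2' _]]].
      rewrite e1, e1' in he. inversion he; subst. apply NNPP; intro hne. eapply Ht_disj; eauto.
    + destruct (proj2 (Hf x) hx) as [z [e1 _]]. rewrite (proj1 (Hf y)) in he.
      rewrite e1 in he; discriminate. destruct hy as [h|h]; subst; auto.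
    + destruct (proj2 (Hf y) hy) as [z [e1 _]]. rewrite (proj1 (Hf x)) in he.
      rewrite e1 in he; discriminate. destruct hx as [h|h]; subst; auto.
    + rewrite (proj1 (Hf x)), (proj1 (Hf y)) in he. inversion he; auto.
      destruct hy as [h|h]; subst; auto. destruct hx as [h|h]; subst; auto.
Qed.


Fixpoint xseq (sc : L -> L) (mx : L -> L -> L) (h : nat -> L) (n : nat) : L :=
  match n with 0 => sc (h 0) | S k => sc (mx (xseq sc mx h k) (h (S k))) end.

Lemma succ_fun : exists sc : L -> L, forall x, immsucc lt x (sc x).
Proof.
  apply choice_fun. intro x. destruct (no_max x) as [y hy]. destruct (succ_ex _ _ hy) as [z [hz _]]. eauto.
Qed.

Lemma max_fun : exists mx : L -> L -> L, forall x y, le x (mx x y) /\ le y (mx x y).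
Proof.
  destruct (choice_fun (fun (p : L * L) z => le (fst p) z /\ le (snd p) z)) as [f hf].
  { intros [x y]. destruct (max2 x y) as [z [h1 [h2 _]]]. eauto. }
  exists (fun x y => f (x, y)). intros x y. apply (hf (x, y)).
Qed.

Lemma fact1 (h : nat -> L) : exists y, forall n, lt (h n) y.
Proof.
  destruct succ_fun as [sc Hsc]. destruct max_fun as [mx Hmx].
  set (x := xseq sc mx h).
  assert (P1 : forall n, lt (h n) (x n)).
  { intros [|n]; unfold x; simpl. apply (Hsc (h 0)).
    apply (le_lt_tr _ (mx (xseq sc mx h n) (h (S n)))); [apply (proj2 (Hmx _ _))|apply Hsc]. }
  assert (P2 : forall n, lt (x n) (x (S n))).
  { intro n. unfold x; simpl.
    apply (le_lt_tr _ (mx (xseq sc mx h n) (h (S n)))); [apply (proj1 (Hmx _ _))|apply Hsc]. }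
  assert (P3 : forall i j, i < j -> lt (x i) (x j)).
  { intros i j; induction j; intro hij; [lia|].
    destruct (Nat.eq_dec i j) as [e0|e0]; [subst; auto|].
    apply (lt_tr _ (x j)); auto. apply IHj; lia. }
  assert (P4 : forall i j, i <= j -> le (x i) (x j)).
  { intros i j hij. destruct (Nat.eq_dec i j). subst; auto. apply lt_le; apply P3; lia. }
  assert (P5 : forall n, exists p, immsucc lt p (x n)).
  { intros [|n]; simpl; eexists; apply Hsc. }
  apply NNPP; intro hn.
  assert (Hn : forall y, exists n, le y (h n)).
  { intro y. apply NNPP; intro h2. apply hn. exists y. intro n. apply not_le_lt. intro h3. apply h2; eauto. }
  set (E := fun y => exists n, y = x n).
  assert (HE : club lt E).
  { split.
    - intro z. destruct (Hn z) as [n hz]. exists (x n). split. exists n; auto. eauto.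
    - intros a [y [[k0 ->] hk0]] hacc. exfalso. destruct (Hn a) as [n hna].
      assert (Hk : exists k, lt (x k) a /\ ~ lt (x (S k)) a).
      { apply NNPP; intro hk. assert (forall j, lt (x (k0 + j)) a).
        { induction j. rewrite Nat.add_0_r; auto. apply NNPP; intro h3. apply hk. exists (k0 + j).
          split; auto. rewrite <- Nat.add_succ_r. auto. }
        specialize (H n). assert (le (x n) (x (k0 + n))) by (apply P4; lia).
        eapply le_lt_false with (x := a) (y := x (k0 + n)); eauto. }
      destruct Hk as [k [hk1 hk2]]. destruct (hacc _ hk1) as [y [[j ->] [hj1 hj2]]].
      destruct (le_lt_dec j k) as [hjk|hjk].
      + eapply le_lt_false; [apply P4; exact hjk| exact hj1].
      + apply hk2. eapply le_lt_tr; [apply P4; exact hjk| exact hj2]. }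
  destruct (HS_stat E HE) as [d [hd [n ->]]].
  destruct (P5 n) as [p hp]. apply (immsucc_not_base _ _ hp). right. apply SS_lim; auto.
Qed.

Lemma min_elt : exists z0, forall z, le z0 z.
Proof. destruct (min_ex (fun _ => True)) as [z0 [_ H]]. exists mu; auto. exists z0; auto. Qed.

Lemma nat_w : exists nw : nat -> L, (forall n, lt (nw n) w) /\ (forall n n', nw n = nw n' -> n = n').
Proof.
  destruct min_elt as [z0 hz0].
  assert (hb : base z0). { left. intros x hx. eapply le_lt_false; eauto. }
  assert (hzw : lt z0 w). { destruct w_lim as [[x0 h0] _]. eapply le_lt_tr; eauto. }
  destruct (choice_fun (fun n z => plus_nat lt z0 n z /\ lt z w)) as [nw Hnw].
  { intro n. destruct (plus_nat_lt_limit z0 n w (or_intror eq_refl) w_lim (le_refl _) hzw) as [z hz]; eauto. }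
  exists nw; split. intro n; apply Hnw. intros n n' he.
  destruct (Hnw n) as [h1 _]. destruct (Hnw n') as [h2 _]. rewrite he in h1.
  eapply plus_nat_inj; eauto.
Qed.

Lemma cnt_bound d (hd : SS d) (h : nat -> L) : (forall n, lt (h n) d) -> exists b, lt b d /\ forall n, lt (h n) b.
Proof.
  intro Hh. apply NNPP; intro hn.
  assert (Hn : forall b, lt b d -> exists n, le b (h n)).
  { intros b hb. apply NNPP; intro h2. apply hn. exists b. split; auto. intro n. apply not_le_lt. intro h3. apply h2; eauto. }
  destruct nat_w as [nw [nw1 nw2]].
  set (X := fun y => exists n, h n = y).
  destruct (choice_fun (fun y n => X y -> h n = y)) as [idx Hidx].
  { intro y. destruct (classic (X y)) as [[n hn']|hx]. exists n; auto. exists 0; tauto. }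
  apply ((proj2 (HS_cf d hd)) w Hsig_w). exists X. split; [|split].
  - intros y [n <-]; auto.
  - intros z hz. destruct (Hn z hz) as [n hn']. exists (h n). split; auto. exists n; auto.
  - exists (fun y => nw (idx y)). split. intros; apply nw1.
    intros y y' hy hy' he. apply nw2 in he. rewrite <- (Hidx y hy), <- (Hidx y' hy'), he. auto.
Qed.

Lemma list_bound d (hd : is_limit lt d) (l : list L) : (forall x, In x l -> lt x d) ->
  exists b, lt b d /\ forall x, In x l -> lt x b.
Proof.
  induction l as [|a l IH]; intro H.
  - destruct hd as [[x hx] _]. exists x; split; auto. intros y [].
  - destruct IH as [b [hb1 hb2]]. intros; apply H; right; auto.
    destruct (max2 a b) as [z [h1 [h2 h3]]].
    assert (lt z d). { destruct h3; subst; auto. apply H; left; auto. }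
    destruct (proj2 hd z H0) as [y [y1 y2]]. exists y; split; auto.
    intros x [<-|hx]; eauto.
Qed.

Lemma cf_lt_mu x : lt (cf x) mu.
Proof.
  assert (Hx : has_cof_le lt x mu).
  { exists (seg lt x). split. auto. split. intros y hy; exists y; split; auto. apply Hlam1. }
  destruct (lt_tot (cf x) mu) as [h|[h|h]]; auto; exfalso.
  2: { apply ((proj2 (Hcf x)) mu h Hx). }
  pose proof (Hcf x) as Hc. rewrite h in Hc. destruct Hc as [[X [X1 [X2 [f [f1 f2]]]]] Hmin].
  destruct Hmu_cf as [[Y [Y1 [Y2 [gY [g1 g2]]]]] _].
  assert (Hb : forall y, exists b, Y y -> lt b x /\ forall z, X z -> lt (f z) y -> lt z b).
  { intro y. destruct (classic (Y y)) as [hy|hy]; [|exists x; tauto].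
    apply NNPP; intro hn. apply (Hmin y (Y1 y hy)). exists (fun z => X z /\ lt (f z) y).
    split; [intros z [hz _]; auto|split].
    - intros x' hx'. apply NNPP; intro h2. apply hn. exists x'. intros _. split; auto.
      intros z hz hfz. apply not_le_lt. intro h3. apply h2. exists z; split; auto.
    - exists f. split. intros z [_ hz]; auto. intros z z' [hz _] [hz' _]; auto. }
  destruct (choice_fun _ Hb) as [bf Hbf].
  set (B := fun b => exists y, Y y /\ bf y = b).
  destruct (choice_fun (fun b y => B b -> Y y /\ bf y = b)) as [iy Hiy].
  { intro b. destruct (classic (B b)) as [[y hy]|hb]. exists y; auto. exists b; tauto. }
  apply (Hmin w). eauto. exists B. split; [|split].
  - intros b [y [hy <-]]. apply (Hbf y hy).
  - intros z hz. destruct (X2 z hz) as [z' [hz'1 hz'2]].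
    destruct (proj2 mu_lim (f z') (f1 z' hz'1)) as [u [u1 u2]].
    destruct (Y2 u u2) as [y [hy1 hy2]].
    exists (bf y). split. exists y; auto. eapply le_tr; eauto. apply lt_le. apply (Hbf y hy1); auto. eauto.
  - exists (fun b => gY (iy b)). split. intros b hb. apply g1. apply (Hiy b hb).
    intros b b' hb hb' he. apply g2 in he; try apply (Hiy _ hb); try apply (Hiy _ hb').
    destruct (Hiy b hb) as [_ e1]. destruct (Hiy b' hb') as [_ e2]. congruence.
Qed.

Variable mus : nat -> L.
Hypothesis Hmus_reg : forall i, regular lt (mus i).
Hypothesis Hmus_inc : forall i, lt (mus i) (mus (S i)).
Variable mup : nat -> L.
Hypothesis Hmup : forall m, succ_card lt (mus m) (mup m).

Lemma mus_lt i j : i < j -> lt (mus i) (mus j).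
Proof. induction j; intro h; [lia|].
  destruct (Nat.eq_dec i j) as [e0|e0]; [subst; auto|].
  apply (lt_tr _ (mus j)); auto. apply IHj; lia. Qed.
Lemma mus_le i j : i <= j -> le (mus i) (mus j).
Proof. intro h. destruct (Nat.eq_dec i j). subst; auto. apply lt_le, mus_lt; lia. Qed.
Lemma mus_lt_mup m : lt (mus m) (mup m).
Proof.
  apply not_le_lt. intro h. apply (proj1 (Hmup m)). exists (fun x => x). split; [|auto].
  intros x hx. eapply lt_le_tr; eauto.
Qed.
Lemma mup_le m : le (mup m) (mus (S m)).
Proof.
  apply not_lt_le. intro h. apply ((proj1 (Hmus_reg (S m))) (mus m) (Hmus_inc m)).
  apply (proj2 (Hmup m)); auto.
Qed.


Hypothesis Ht_fin : forall a, finite_set (t a).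

Lemma list_bound_L (l : list L) : exists b, forall x, In x l -> lt x b.
Proof.
  induction l as [|a l [b hb]].
  - exists mu; intros x [].
  - destruct (max2 a b) as [z [h1 [h2 _]]]. destruct (no_max z) as [y hy]. exists y.
    intros x [<-|hx]; eauto.
Qed.

Definition Eset (y : L) : Prop := forall eta, lt eta y -> exists a, lt a y /\ forall z, t a z -> lt eta z /\ lt z y.

Lemma E_club : club lt Eset.
Proof.
  split.
  - intro x0.
    assert (Hst : forall x, exists p : L * L, lt x (fst p) /\ (forall z, t (fst p) z -> lt x z) /\
        lt (fst p) (snd p) /\ (forall z, t (fst p) z -> lt z (snd p)) /\ lt x (snd p)).
    { intro x. destruct (fact2 x) as [a [ha1 ha2]]. destruct (Ht_fin a) as [l hl].
      destruct (list_bound_L (a :: l)) as [b hb]. exists (a, b); simpl.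
      assert (lt a b) by (apply hb; left; auto).
      repeat split; eauto. intros z hz; apply hb; right; apply hl; auto. }
    destruct (choice_fun _ Hst) as [pf Hpf].
    set (xs := fun n => Nat.iter n (fun x => snd (pf x)) x0).
    assert (Hxs : forall n, lt (xs n) (xs (S n))). { intro n. unfold xs; simpl. apply Hpf. }
    destruct (fact1 xs) as [b0 hb0].
    destruct (lub_ex (fun z => exists n, z = xs n) b0) as [y [hy1 hy2]].
    { intros z [n ->]; auto. }
    exists y. split.
    + intros eta heta. destruct (hy2 eta heta) as [z [[n ->] hz]].
      exists (fst (pf (xs n))). destruct (Hpf (xs n)) as [p1 [p2 [p3 [p4 p5]]]].
      assert (le (xs (S n)) y) by (apply hy1; eauto).
      split. eapply lt_le_tr; [exact p3|exact H].
      intros z hz2. split; [eauto| eapply lt_le_tr; [apply p4; auto|exact H]].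
    + apply (lt_le_tr _ (xs 1)). apply (Hxs 0). apply hy1; eauto.
  - intros a _ hacc eta heta. destruct (hacc eta heta) as [y [hy1 [hy2 hy3]]].
    destruct (hy1 eta hy2) as [al [h1 h2]]. exists al. split; eauto.
    intros z hz. destruct (h2 z hz); split; eauto.
Qed.

Variable c0 : L -> L -> L.
Variable C : L -> L -> Prop.
Hypothesis Hc0 : forall d, SS d ->
     strict_incr_below lt (c0 d) sigma /\ club_in lt (ran_below lt (c0 d) sigma) d.
Hypothesis HC_club : forall d, SS d -> club_in lt (C d) d.
Hypothesis HC_ran : forall d x, SS d -> ran_below lt (c0 d) sigma x -> C d x.
Variable e : nat -> L -> L -> Prop.
Hypothesis He_club : forall m a, club_in lt (e m a) a.
Hypothesis He_mono : forall m a x, e m a x -> e (S m) a x.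
Hypothesis He_card : forall m a, le_card_sum lt (e m a) (cf a) (mup m).
Hypothesis He_coh : forall m a d x, SS d -> e m a d ->
     Cm lt (c0 d) sigma (C d) m x -> e m a x.

Lemma e_mono m m' a x : e m a x -> m <= m' -> e m' a x.
Proof. intros h hm. induction hm; auto. Qed.

Lemma least_nat (P : nat -> Prop) n : P n -> exists n0, P n0 /\ n0 <= n /\ forall j, j < n0 -> ~ P j.
Proof.
  induction n as [n IH] using (well_founded_ind Wf_nat.lt_wf).
  intro hn. destruct (classic (exists j, j < n /\ P j)) as [[j [hj1 hj2]]|hno].
  - destruct (IH j hj1 hj2) as [n0 [a [b c]]]. exists n0; repeat split; auto; lia.
  - exists n; repeat split; auto. intros j hj hp; apply hno; eauto.
Qed.

Lemma abound m x d : is_limit lt d -> lt d x -> ~ e m x d ->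
  exists s, lt s d /\ forall z, e m x z -> lt s z -> lt z d -> False.
Proof.
  intros hl hdx hn. apply NNPP; intro h. apply hn. apply (proj2 (proj2 (He_club m x))); auto.
  - destruct hl as [[s0 hs0] _]. apply NNPP; intro h2. apply h. exists s0; split; auto.
    intros z hz1 hz2 hz3. apply h2; eauto.
  - intros s hs. apply NNPP; intro h2. apply h. exists s; split; auto.
    intros z hz1 hz2 hz3. apply h2; eauto.
Qed.

Lemma bbound m x bs : lt (cf x) (cf bs) -> lt (mup m) (cf bs) ->
  exists s, lt s bs /\ forall z, e m x z -> lt s z -> lt z bs -> False.
Proof.
  intros h1 h2. apply NNPP; intro hn.
  assert (Hc : forall s, lt s bs -> exists z, e m x z /\ lt s z /\ lt z bs).
  { intros s hs. apply NNPP; intro h3. apply hn. exists s; split; auto. intros z a b c; apply h3; eauto. }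
  destruct (He_card m x) as [f [f1 f2]].
  set (X1 := fun z => e m x z /\ lt z bs /\ exists y, f z = inl y).
  set (X2 := fun z => e m x z /\ lt z bs /\ exists y, f z = inr y).
  assert (Hmap : forall (X : L -> Prop) k, (forall z, X z -> e m x z /\ lt z bs) ->
     (forall z, X z -> lt (uval (f z)) k) -> (forall z z', X z -> X z' -> uval (f z) = uval (f z') -> f z = f z') ->
     cofinal_in lt X bs -> lt k (cf bs) -> False).
  { intros X k hX1 hX2 hX3 hcof hk. apply ((proj2 (Hcf bs)) k hk). exists X. split; [intros z hz; apply hX1; auto|split; auto].
    exists (fun z => uval (f z)). split; auto. intros z z' hz hz' he. apply f2; try apply hX1; auto. }
  destruct (classic (cofinal_in lt X1 bs)) as [hc1|hc1].
  - apply (Hmap X1 (cf x)); auto.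
    + intros z [a [b _]]; auto.
    + intros z [a [b [y hy]]]. specialize (f1 z a). rewrite hy in *. auto.
    + intros z z' [_ [_ [y hy]]] [_ [_ [y' hy']]]. rewrite hy, hy'. simpl. congruence.
  - destruct (classic (cofinal_in lt X2 bs)) as [hc2|hc2].
    + apply (Hmap X2 (mup m)); auto.
      * intros z [a [b _]]; auto.
      * intros z [a [b [y hy]]]. specialize (f1 z a). rewrite hy in *. auto.
      * intros z z' [_ [_ [y hy]]] [_ [_ [y' hy']]]. rewrite hy, hy'. simpl. congruence.
    + unfold cofinal_in in hc1, hc2.
      apply not_all_ex_not in hc1. destruct hc1 as [u1 hu1].
      apply not_all_ex_not in hc2. destruct hc2 as [u2 hu2].
      apply imply_to_and in hu1. apply imply_to_and in hu2.
      destruct hu1 as [u1b hu1]. destruct hu2 as [u2b hu2].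
      destruct (max2 u1 u2) as [u [hu1' [hu2' hu3]]].
      assert (lt u bs) by (destruct hu3; subst; auto).
      destruct (Hc u H) as [z [hz1 [hz2 hz3]]].
      specialize (f1 z hz1). destruct (f z) eqn:hf.
      * apply hu1. exists z. split. split; auto. split; auto. eauto. eapply le_tr; eauto.
      * apply hu2. exists z. split. split; auto. split; auto. eauto. eapply le_tr; eauto.
Qed.

Section Walk.
Variable nx : nat -> L -> L -> L.
Variable d : L.
Hypothesis Hnx : forall m x, (lt d x /\ ~ e m x d -> is_min lt (fun z => e m x z /\ le d z) (nx m d x)) /\
  (~ (lt d x /\ ~ e m x d) -> nx m d x = x).

Definition G (m : nat) (xi : L) (n : nat) : L := Nat.iter n (nx m d) xi.

Lemma nx_lt m x : lt d x -> ~ e m x d -> lt d (nx m d x) /\ lt (nx m d x) x /\ e m x (nx m d x).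
Proof.
  intros h1 h2. destruct (proj1 (Hnx m x) (conj h1 h2)) as [[a b] _].
  split; [|split; auto]. destruct b as [b|b]; [exact b| rewrite <- b in a; tauto]. apply (proj1 (He_club m x)); auto.
Qed.

Lemma G_gt m xi : lt d xi -> forall n, lt d (G m xi n).
Proof.
  intros h n. induction n; simpl; auto. unfold G in *; simpl.
  destruct (classic (lt d (Nat.iter n (nx m d) xi) /\ ~ e m (Nat.iter n (nx m d) xi) d)) as [[a b]|hh].
  - apply nx_lt; auto.
  - rewrite (proj2 (Hnx m _) hh). auto.
Qed.

Lemma G_stay m xi n : e m (G m xi n) d -> forall j, n <= j -> G m xi j = G m xi n.
Proof.
  intros he j hj. induction hj; auto. unfold G in *; simpl. rewrite IHhj.
  apply (proj2 (Hnx m _)). tauto.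
Qed.

Lemma stab xi : lt d xi -> exists M x, forall m, M <= m -> exists n, G m xi n = x /\ e m x d.
Proof.
  intro hxi.
  assert (S1 : forall n, exists p : nat * L, forall m, fst p <= m -> G m xi n = snd p).
  { induction n as [|n [[M g] IH]].
    - exists (0, xi); auto.
    - simpl in IH.
      assert (hg : lt d g) by (rewrite <- (IH M (le_n _)); apply G_gt; auto).
      destruct (classic (exists m0, M <= m0 /\ e m0 g d)) as [[m0 [hm0 he0]]|hno].
      + exists (max M m0, g). simpl. intros m hm. unfold G in *; simpl. rewrite IH by lia.
        apply (proj2 (Hnx m g)). intros [_ hn]. apply hn. eapply e_mono; eauto; lia.
      + destruct (min_ex (fun v => exists m, M <= m /\ nx m d g = v)) as [v0 [[m1 [hm1 hv0]] hmin]].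
        { exists (nx M d g), M; auto. }
        exists (m1, v0). simpl. intros m hm. unfold G in *; simpl. rewrite IH by lia.
        assert (hnm : ~ e m g d) by (intro; apply hno; exists m; split; auto; lia).
        assert (hnm1 : ~ e m1 g d) by (intro; apply hno; exists m1; split; auto).
        apply le_antisym.
        * destruct (proj1 (Hnx m g) (conj hg hnm)) as [_ hmn]. rewrite <- hv0. apply hmn.
          destruct (proj1 (Hnx m1 g) (conj hg hnm1)) as [[a b] _]. split; auto. eapply e_mono; eauto.
        * apply hmin. exists m; split; auto; lia. }
  destruct (choice_fun _ S1) as [pf Hpf].
  assert (HN : exists N, snd (pf (S N)) = snd (pf N)).
  { apply NNPP; intro hn.
    assert (Hdec : forall n, lt (snd (pf (S n))) (snd (pf n))).
    { intro n. set (m := max (fst (pf n)) (fst (pf (S n)))).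
      assert (e1 : G m xi n = snd (pf n)) by (apply Hpf; lia).
      assert (e2 : G m xi (S n) = snd (pf (S n))) by (apply Hpf; lia).
      unfold G in e1, e2; simpl in e2. rewrite e1 in e2.
      destruct (classic (lt d (snd (pf n)) /\ ~ e m (snd (pf n)) d)) as [[a b]|hh].
      - rewrite <- e2. apply nx_lt; auto.
      - exfalso. apply hn. exists n. rewrite <- e2. apply (proj2 (Hnx m _) hh). }
    destruct (min_ex (fun v => exists n, v = snd (pf n))) as [v [[n ->] hv]]. { exists (snd (pf 0)), 0; auto. }
    eapply le_lt_false. apply hv. exists (S n); eauto. apply Hdec. }
  destruct HN as [N hN]. exists (max (fst (pf N)) (fst (pf (S N)))), (snd (pf N)).
  intros m hm. exists N.
  assert (e1 : G m xi N = snd (pf N)) by (apply Hpf; lia).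
  assert (e2 : G m xi (S N) = snd (pf (S N))) by (apply Hpf; lia).
  split; auto. unfold G in e1, e2; simpl in e2. rewrite e1 in e2.
  apply NNPP; intro hne.
  assert (hg : lt d (snd (pf N))) by (rewrite <- e1; apply G_gt; auto).
  destruct (nx_lt m _ hg hne) as [_ [h _]]. rewrite e2, hN in h. eapply lt_irr; eauto.
Qed.

Lemma walk_lemma m xi zeta bs xx : lt zeta d -> lt d xi ->
  (forall n, ~ e m (G m xi n) d -> exists s, lt s zeta /\ forall z, e m (G m xi n) z -> lt s z -> lt z d -> False) ->
  (exists n, G m xi n = xx /\ e m xx d) ->
  lt zeta bs -> e m xx bs ->
  (exists s, lt s zeta /\ forall z, e m xx z -> lt s z -> lt z bs -> False) ->
  exists k, walkpt lt (e m) zeta xi k bs.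
Proof.
  intros hz hxi Ha [n [hn1 hn2]] hzb hxb [s' [hs'1 hs'2]].
  destruct (least_nat (fun j => e m (G m xi j) d) n) as [n0 [h0 [h0' h0'']]].
  { rewrite hn1; auto. }
  assert (hxx : G m xi n0 = xx).
  { rewrite <- hn1. symmetry. apply G_stay; auto. }
  assert (W : forall j, j <= n0 -> walkpt lt (e m) zeta xi j (G m xi j)).
  { induction j; intro hj. constructor.
    assert (hnj : ~ e m (G m xi j) d) by (apply h0''; lia).
    specialize (IHj ltac:(lia)).
    assert (hgj : lt d (G m xi j)) by (apply G_gt; auto).
    apply wpS with (x := G m xi j); auto. eauto.
    destruct (proj1 (Hnx m _) (conj hgj hnj)) as [[a b] hmin].
    unfold G at 2; simpl. fold (G m xi j). split.
    - split; [exact a|]. left. exact (lt_le_tr _ _ _ hz b).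
    - intros z [hz1 hz2]. destruct (classic (le d z)) as [hdz|hdz].
      + apply hmin; auto.
      + exfalso. apply not_le_lt in hdz. destruct (Ha j hnj) as [s [hs1 hs2]].
        apply (hs2 z hz1); eauto. }
  exists (S n0). apply wpS with (x := G m xi n0).
  - apply W; auto.
  - eapply lt_tr; [exact hz|]. apply G_gt; auto.
  - rewrite hxx. split. split; auto.
    intros z [hz1 hz2]. destruct (classic (le bs z)) as [h|h]; auto.
    exfalso. apply not_le_lt in h. apply (hs'2 z hz1); eauto.
Qed.

End Walk.

Lemma find_interval d x z0 : SS d -> (forall z, le z0 z) -> C d x -> ~ acc_in lt (C d) x ->
  lt (c0 d z0) x -> exists g n, index_base lt sigma g /\ interval lt (c0 d) g n x.
Proof.
  intros hd hz0 hCx hnacc hcx.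
  set (c := c0 d) in *.
  destruct (Hc0 d hd) as [hinc [hr1 [hr2 hr3]]]. fold c in hinc, hr1, hr2, hr3.
  assert (hxd : lt x d) by (apply (proj1 (HC_club d hd)); auto).
  destruct (min_ex (fun j => lt j sigma /\ le x (c j))) as [j [[hj1 hj2] hjmin]].
  { destruct (hr2 x hxd) as [y [[i [hi1 hi2]] hy]]. subst y. eauto. }
  assert (hbelow : forall i, lt i j -> lt (c i) x).
  { intros i hi. apply not_le_lt. intro h. assert (le j i) by (apply hjmin; split; eauto).
    eapply le_lt_false; eauto. }
  destruct (classic (is_zero lt j \/ is_limit lt j)) as [[hz|hl]|hnb].
  - exfalso. destruct (hz0 j) as [h|h]. apply (hz z0 h). subst j.
    eapply le_lt_false; eauto.
  - exfalso.
    destruct (lub_ex (fun y => exists i, lt i j /\ y = c i) (c j)) as [s [hs1 hs2]].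
    { intros y [i [hi ->]]. left. apply hinc; auto. }
    assert (hsx : le s x).
    { apply not_lt_le. intro h. destruct (hs2 x h) as [y [[i [hi ->]] hxi]].
      specialize (hbelow i hi). eapply lt_asym; eauto. }
    assert (hsd : lt s d) by eauto.
    assert (hacc : forall u, lt u s -> exists i, lt i j /\ lt u (c i) /\ lt (c i) s).
    { intros u hu. destruct (hs2 u hu) as [y [[i [hi ->]] hui]]. exists i. split; auto. split; auto.
      destruct (proj2 hl i hi) as [i' [hi1 hi2]]. apply (lt_le_tr _ (c i')). apply hinc; eauto.
      apply hs1. eauto. }
    assert (hrs : ran_below lt c sigma s).
    { apply hr3; auto.
      - destruct (proj1 hl) as [i0 hi0]. destruct (proj2 hl i0 hi0) as [i1 [hi1 hi2]].
        exists (c i0). split. exists i0; split; eauto. apply (lt_le_tr _ (c i1)). apply hinc; eauto. apply hs1; eauto.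
      - intros u hu. destruct (hacc u hu) as [i [hi1 [hi2 hi3]]]. exists (c i). split; auto. exists i; split; eauto. }
    destruct hrs as [j'' [hj''1 hj''2]].
    assert (hjj : le j j'').
    { apply not_lt_le. intro h. destruct (proj2 hl j'' h) as [i' [hi1 hi2]].
      assert (lt (c j'') (c i')) by (apply hinc; eauto).
      assert (le (c i') s) by (apply hs1; eauto). rewrite hj''2 in H. eapply le_lt_false; eauto. }
    assert (hcjs : le (c j) s).
    { destruct hjj as [h|h]. left. rewrite <- hj''2. apply hinc; auto. rewrite h, hj''2; auto. }
    assert (hxs : x = s) by (apply le_antisym; eauto using le_tr).
    apply hnacc. intros u hu. rewrite hxs in hu. destruct (hacc u hu) as [i [hi1 [hi2 hi3]]].
    exists (c i). split. apply HC_ran; auto. exists i; split; eauto. rewrite hxs; auto.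
  - destruct (not_base_pred _ hnb) as [j' hj']. destruct (decomp j') as [g [n [hb hp]]].
    exists g, n. split.
    + split; auto. apply (le_lt_tr _ j'). eapply plus_nat_le; eauto. apply (lt_tr _ j); auto. apply hj'.
    + exists j', j. split; auto. split. econstructor; eauto. split; auto. apply hbelow. apply hj'.
Qed.

Lemma list_nat (P : L -> nat -> Prop) (l : list L) : (forall xi N N', P xi N -> N <= N' -> P xi N') ->
  (forall xi, In xi l -> exists N, P xi N) -> exists N, forall xi, In xi l -> P xi N.
Proof.
  intros Hup. induction l as [|a l IH]; intro H.
  - exists 0; intros _ [].
  - destruct IH as [N1 h1]. intros; apply H; right; auto.
    destruct (H a (or_introl eq_refl)) as [N2 h2]. exists (max N1 N2).
    intros xi [<-|hx]. apply (Hup _ N2); auto; lia. apply (Hup _ N1); auto; lia.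
Qed.

Hypothesis Hmus_lt : forall i, lt (mus i) mu.
Hypothesis Hmus_cof : forall x, lt x mu -> exists i, lt x (mus i).
Hypothesis Hmus0 : lt sigma (mus 0).
Hypothesis HC_cf : forall d g m x, SS d -> index_base lt sigma g ->
     nacc_in lt (C d) x -> interval lt (c0 d) g m x -> lt (mup m) (cf x).

Lemma main_res : in_idp lt SS mu C cf
    (fun bs => ~ exists a b m, lt a b /\
        forall z xi, t a z -> t b xi ->
          lt z xi /\ exists k, walkpt lt (e m) z xi k bs).
Proof.
  destruct (choice_fun (fun (p : nat * L * L) y => let '(m, d, x) := p in
     (lt d x /\ ~ e m x d -> is_min lt (fun z => e m x z /\ le d z) y) /\
     (~ (lt d x /\ ~ e m x d) -> y = x))) as [nf Hnf].
  { intros [[m d] x]. destruct (classic (lt d x /\ ~ e m x d)) as [[h1 h2]|h].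
    - destruct (proj1 (proj2 (He_club m x)) d h1) as [y0 hy0].
      destruct (min_ex (fun z => e m x z /\ le d z)) as [y hy]; eauto.
      exists y; split; auto. intro; tauto.
    - exists x; split; tauto. }
  set (nx := fun m d x => nf (m, d, x)).
  assert (Hnx : forall d m x, (lt d x /\ ~ e m x d -> is_min lt (fun z => e m x z /\ le d z) (nx m d x)) /\
     (~ (lt d x /\ ~ e m x d) -> nx m d x = x)).
  { intros d m x. exact (Hnf (m, d, x)). }
  exists Eset. split. apply E_club. intros d hd hEd.
  assert (hdl := SS_lim d hd).
  destruct min_elt as [z0 hz0].
  destruct (fact2 d) as [be [hbe1 hbe2]]. destruct (Ht_fin be) as [lb hlb].
  set (GG := G nx d).
  assert (Hst : exists Mstar, forall xi, In xi lb -> exists x, lt (cf x) (mus Mstar) /\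
      forall m, Mstar <= m -> exists n, GG m xi n = x /\ e m x d).
  { apply (list_nat (fun xi N => exists x, lt (cf x) (mus N) /\
      forall m, N <= m -> exists n, GG m xi n = x /\ e m x d)).
    - intros xi N N' [x [h1 h2]] hN. exists x. split. eapply lt_le_tr; eauto. apply mus_le; auto.
      intros m hm; apply h2; lia.
    - intros xi hxi. assert (hdxi : lt d xi) by (apply hbe2, hlb; auto).
      destruct (stab nx d (Hnx d) xi hdxi) as [M [x hM]].
      destruct (Hmus_cof _ (cf_lt_mu x)) as [i hi].
      exists (max M i), x. split. eapply lt_le_tr; eauto. apply mus_le; lia.
      intros m hm; apply hM; lia. }
  destruct Hst as [Mstar HMstar].
  destruct hdl as [[s0 hs0] hdl2].
  destruct (choice_fun (fun (p : L * nat * nat) s => let '(xi, m, n) := p in lt s d /\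
      (lt d xi -> ~ e m (GG m xi n) d -> forall z, e m (GG m xi n) z -> lt s z -> lt z d -> False))) as [Bf HBf].
  { intros [[xi m] n]. destruct (classic (lt d xi /\ ~ e m (GG m xi n) d)) as [[h1 h2]|h].
    - destruct (abound m (GG m xi n) d (conj (ex_intro _ s0 hs0) hdl2)) as [s [hs1 hs2]]; auto.
      apply G_gt; auto. exists s; split; auto.
    - exists s0; split; auto; intros; tauto. }
  assert (Hbx : forall xi, exists b, lt b d /\ forall m n, lt (Bf (xi, m, n)) b).
  { intro xi.
    assert (forall m, exists b, lt b d /\ forall n, lt (Bf (xi, m, n)) b).
    { intro m. apply cnt_bound; auto. intro n. apply (HBf (xi, m, n)). }
    destruct (choice_fun _ H) as [bm hbm].
    destruct (cnt_bound d hd bm) as [b [hb1 hb2]]. intro m; apply hbm.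
    exists b; split; auto. intros m n. apply (lt_tr _ (bm m)); auto. apply hbm. }
  destruct (choice_fun _ Hbx) as [bxf Hbxf].
  destruct (list_bound d (conj (ex_intro _ s0 hs0) hdl2) (map bxf lb)) as [b [hb1 hb2]].
  { intros x hx. apply in_map_iff in hx. destruct hx as [xi [<- _]]. apply Hbxf. }
  assert (hc0d : lt (c0 d z0) d).
  { apply (proj1 (proj2 (Hc0 d hd))). exists z0. split; auto. apply (le_lt_tr _ w); auto. }
  destruct (max2 b (c0 d z0)) as [zb [hzb1 [hzb2 hzb3]]].
  assert (hzbd : lt zb d) by (destruct hzb3; subst; auto).
  destruct (hdl2 zb hzbd) as [b' [hb'1 hb'2]].
  set (a := mus (S (S Mstar))).
  split. intros x [_ [_ h]]; exact h.
  exists ((a, b') :: nil). split.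
  { constructor; [simpl; split; [apply Hmus_lt | exact hb'2] | constructor]. }
  intros x [hA [hEx hCx]]. exists (a, b'). split. left; auto. simpl. split; auto.
  destruct (classic (acc_in lt (C d) x)) as [hacc|hnacc]; auto.
  destruct (classic (lt (cf x) a)) as [hcfa|hcfa]; auto.
  destruct (classic (lt x b')) as [hxb|hxb]; auto.
  exfalso. apply hA. apply not_lt_le in hcfa. apply not_lt_le in hxb.
  assert (hxd : lt x d) by (apply (proj1 (HC_club d hd)); auto).
  destruct (find_interval d x z0 hd hz0 hCx hnacc) as [g [n [hg hint]]].
  { apply (le_lt_tr _ zb); auto. apply (lt_le_tr _ b'); auto. }
  assert (hcfn : lt (mup n) (cf x)) by (apply (HC_cf d g n x); auto; split; auto).
  set (m' := max n Mstar).
  assert (hmup' : lt (mup m') (cf x)).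
  { destruct (le_lt_dec Mstar n) as [h|h].
    - unfold m'. rewrite Nat.max_l by lia. auto.
    - unfold m'. rewrite Nat.max_r by lia. apply (le_lt_tr _ (mus (S Mstar))). apply mup_le.
      apply (lt_le_tr _ a); auto. }
  assert (hCm : Cm lt (c0 d) sigma (C d) m' x).
  { right. split; auto. exists g, n. split; auto. split; auto. unfold m'; lia. }
  assert (hwcf : le w (cf x)).
  { left. apply (lt_tr _ sigma); auto. apply (lt_tr _ (mus 0)); auto.
    apply (le_lt_tr _ (mus n)); [apply mus_le; lia|].
    apply (lt_tr _ (mup n)); auto. apply mus_lt_mup. }
  assert (hxl := cof_limit_w x (cf x) (Hcf x) hwcf).
  assert (Hs' : forall xi, exists s, In xi lb -> lt s x /\ exists xx, (exists n0, GG m' xi n0 = xx /\ e m' xx d) /\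
      forall z, e m' xx z -> lt s z -> lt z x -> False).
  { intro xi. destruct (classic (In xi lb)) as [hin|hin]; [|exists x; tauto].
    destruct (HMstar xi hin) as [xx [hxx1 hxx2]].
    assert (hcfxx : lt (cf xx) (cf x)).
    { apply (lt_le_tr _ (mus Mstar)); auto. apply lt_le. apply (le_lt_tr _ (mus m')).
      apply mus_le; unfold m'; lia. apply (lt_tr _ (mup m')); auto. apply mus_lt_mup. }
    destruct (bbound m' xx x hcfxx hmup') as [s [hs1 hs2]].
    exists s. intros _. split; auto. exists xx. split; auto. apply hxx2. unfold m'; lia. }
  destruct (choice_fun _ Hs') as [s'f Hs'f].
  destruct (list_bound x hxl (b :: map s'f lb)) as [eta [heta1 heta2]].
  { intros y [<-|hy]. apply (lt_le_tr _ b'); auto. apply (le_lt_tr _ zb); auto.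
    apply in_map_iff in hy. destruct hy as [xi [<- hxi]]. apply (Hs'f xi hxi). }
  destruct (hEx eta heta1) as [al [hal1 hal2]].
  exists al, be, m'. split.
  { apply (lt_tr _ x); auto. apply (lt_tr _ d); auto. }
  intros z xi hz hxi.
  assert (hin : In xi lb) by (apply hlb; auto).
  assert (hdxi : lt d xi) by (apply hbe2; auto).
  destruct (hal2 z hz) as [hz1 hz2].
  split. apply (lt_tr _ x); auto. apply (lt_tr _ d); auto.
  destruct (Hs'f xi hin) as [hs1 [xx [hxx1 hxx2]]].
  apply (walk_lemma nx d (Hnx d) m' xi z x xx); auto.
  - apply (lt_tr _ x); auto.
  - intros n0 hn0. exists (Bf (xi, m', n0)). split.
    + apply (lt_tr _ b). apply (lt_tr _ (bxf xi)). apply Hbxf. apply hb2. apply in_map; auto.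
      apply (lt_tr _ eta); auto. apply heta2. left; auto.
    + apply (HBf (xi, m', n0)); auto.
  - destruct hxx1 as [n1 [_ hxd']]. apply (He_coh m' xx d x hd hxd' hCm).
  - exists (s'f xi). split; auto. apply (lt_tr _ eta); auto. apply heta2. right. apply in_map; auto.
Qed.

End Main.

Theorem theorem6p1
  (L : Type) (lt : L -> L -> Prop) (Hwo : wellorder lt)
  (cf : L -> L) (Hcf : forall a, cof lt a (cf a))
  (w : L) (Hw : is_omega lt w)
  (mu : L) (Hmu_card : is_card lt mu) (Hmu_cf : cof lt mu w)
  (Hlam1 : forall a, le_card (seg lt a) (seg lt mu))
  (Hlam2 : ~ le_card (fun _ => True) (seg lt mu))
  (sigma : L) (Hsig_reg : regular lt sigma) (Hsig_w : lt w sigma)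
  (Hsig_mu : lt sigma mu)
  (SS : L -> Prop) (HS_stat : stationary lt SS)
  (HS_cf : forall d, SS d -> cof lt d sigma)
  (mus : nat -> L) (Hmus_reg : forall i, regular lt (mus i))
  (Hmus_inc : forall i, lt (mus i) (mus (S i)))
  (Hmus_lt : forall i, lt (mus i) mu)
  (Hmus_cof : forall x, lt x mu -> exists i, lt x (mus i))
  (Hmus0 : lt sigma (mus 0))
  (mup : nat -> L) (Hmup : forall m, succ_card lt (mus m) (mup m))
  (c0 : L -> L -> L)
  (Hc0 : forall d, SS d ->
     strict_incr_below lt (c0 d) sigma /\ club_in lt (ran_below lt (c0 d) sigma) d)
  (Hc0_guess : forall E, club lt E ->
     stationary lt (fun d => SS d /\ forall x, ran_below lt (c0 d) sigma x -> E x))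
  (C : L -> L -> Prop)
  (HC_club : forall d, SS d -> club_in lt (C d) d)
  (HC_ran : forall d x, SS d -> ran_below lt (c0 d) sigma x -> C d x)
  (HC_card : forall d g m, SS d -> index_base lt sigma g ->
     le_card (fun x => C d x /\ interval lt (c0 d) g m x) (seg lt (mup m)))
  (HC_cf : forall d g m x, SS d -> index_base lt sigma g ->
     nacc_in lt (C d) x -> interval lt (c0 d) g m x -> lt (mup m) (cf x))
  (HC_guess : forall E, club lt E ->
     stationary lt (fun d => SS d /\ forall g m, index_base lt sigma g ->
       exists x, E x /\ nacc_in lt (C d) x /\ interval lt (c0 d) g m x))
  (e : nat -> L -> L -> Prop)
  (He_club : forall m a, club_in lt (e m a) a)
  (He_mono : forall m a x, e m a x -> e (S m) a x)
  (He_card : forall m a, le_card_sum lt (e m a) (cf a) (mup m))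
  (He_coh : forall m a d x, SS d -> e m a d ->
     Cm lt (c0 d) sigma (C d) m x -> e m a x)
  (t : L -> L -> Prop) (Ht_fin : forall a, finite_set (t a))
  (Ht_disj : forall a b x, a <> b -> t a x -> t b x -> False) :
  in_idp lt SS mu C cf
    (fun bs => ~ exists a b m, lt a b /\
        forall z xi, t a z -> t b xi ->
          lt z xi /\ exists k, walkpt lt (e m) z xi k bs).
Proof.
  exact (main_res L lt Hwo cf Hcf w Hw mu Hmu_cf Hlam1 Hlam2 sigma Hsig_w Hsig_mu SS HS_stat
    HS_cf t Ht_disj mus Hmus_reg Hmus_inc mup Hmup Ht_fin c0 C Hc0 HC_club HC_ran e He_club
    He_mono He_card He_coh Hmus_lt Hmus_cof Hmus0 HC_cf).
Qed.
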